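(* Let $q$ be a prime power and let $\mathbf{G}\in\mathbb{F}_q^{k\times n}$ be a generator matrix of a linear $[n,k]_q$ code. Consider a coded storage system with files $f_1,\dots,f_k$ in which, for each $i\in[k]$, file $f_i$ has a given list $\mathcal{R}_i=(R_{i,1},\dots,R_{i,t_i})$ of $t_i\ge1$ recovery sets, each of size $1$ or $2$, and all servers have service rate $1$. Let $G$ be the graph representation of the code. Then $m(G)\le\lambda^\star(\mathbf{G})=m_f(G)\le v(G)$.
   Context: Let $\mathbf{g}_1,\dots,\mathbf{g}_n$ be the columns of $\mathbf{G}$ and $\mathbf{e}_i$ the $i$-th unit vector. A set $R\subseteq[n]$ is a recovery set for file $f_i$ if there exist nonzero $\alpha_j\in\mathbb{F}_q$ ($j\in R$) with $\sum_{j\in R}\alpha_j\mathbf{g}_j=\mathbf{e}_i$. The service rate region $\mathcal{S}(\mathbf{G})$ is the set of $\boldsymbol{\lambda}\in\mathbb{R}^k$ for which there exist real $\lambda_{i,j}\ge0$ with $\sum_{j=1}^{t_i}\lambda_{i,j}=\lambda_i$ for all $i$ and $\sum_{i=1}^k\sum_{j\in[t_i]:\,l\in R_{i,j}}\lambda_{i,j}\le1$ for every server $l\in[n]$. The service capacity is $\lambda^\star(\mathbf{G})=\max\{\sum_{i=1}^k\lambda_i:\boldsymbol{\lambda}\in\mathcal{S}(\mathbf{G})\}$. The graph representation $G$ is the (multi)graph with vertex set $[n]$ plus one new dummy vertex $d_{i,j}$ for each recovery set $R_{i,j}$ of size 1, and edges indexed by $(i,j)$: if $R_{i,j}=\{a,b\}$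 the edge joins $a$ and $b$; if $R_{i,j}=\{r\}$ it joins $r$ and $d_{i,j}$. $m(G)$ is the maximum number of pairwise non-adjacent edges (matching number); $m_f(G)$ is the maximum of $\sum_e x_e$ over assignments $x_e\in[0,1]$ with the sum over edges incident to each vertex at most 1 (fractional matching number); $v(G)$ is the minimum size of a vertex set meeting every edge (vertex cover number). *)

(* Defs.v *)
From HB Require Import structures.
From mathcomp Require Import all_boot all_order all_algebra.
From mathcomp Require Import reals.
Set Implicit Arguments. Unset Strict Implicit. Unset Printing Implicit Defensive.
Import Order.TTheory GRing.Theory Num.Theory.
Local Open Scope ring_scope.

Definition recovery_set (F : fieldType) (k n : nat) (G : 'M[F]_(k, n))
  (i : 'I_k) (R : {set 'I_n}) : Prop :=
  exists alpha : 'I_n -> F,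
    (forall j, j \in R -> alpha j != 0) /\
    \sum_(j in R) alpha j *: col j G = delta_mx i (0 : 'I_1).

(* Edge (= recovery set) index type: pairs (i, j) with j < t_i. *)
Definition edge_idx (k : nat) (t : 'I_k -> nat) : finType :=
  {i : 'I_k & 'I_(t i)}.

Definition RS (k n : nat) (t : 'I_k -> nat)
  (Rs : forall i : 'I_k, 'I_(t i) -> {set 'I_n}) (e : edge_idx t) : {set 'I_n} :=
  Rs (tag e) (tagged e).

Definition dummy_idx (k n : nat) (t : 'I_k -> nat)
  (Rs : forall i : 'I_k, 'I_(t i) -> {set 'I_n}) : finType :=
  {e : edge_idx t | #|RS Rs e| == 1%N}.

Definition vertex (k n : nat) (t : 'I_k -> nat)
  (Rs : forall i : 'I_k, 'I_(t i) -> {set 'I_n}) : finType :=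
  ('I_n + dummy_idx Rs)%type.

(* Endpoints of edge (i,j): {a,b} if R_{i,j} = {a,b}; {r, d_{i,j}} if R_{i,j} = {r}. *)
Definition ends (k n : nat) (t : 'I_k -> nat)
  (Rs : forall i : 'I_k, 'I_(t i) -> {set 'I_n}) (e : edge_idx t)
  : {set vertex Rs} :=
  ((@inl 'I_n (dummy_idx Rs)) @: RS Rs e) :|:
  (match @insub _ (fun e => #|RS Rs e| == 1%N) (dummy_idx Rs) e with
   | Some d => [set inr d]
   | None => set0
   end).

Definition is_matching (k n : nat) (t : 'I_k -> nat)
  (Rs : forall i : 'I_k, 'I_(t i) -> {set 'I_n}) (M : {set edge_idx t}) : bool :=
  [forall e1 in M, forall e2 in M, (e1 != e2) ==> [disjoint ends Rs e1 & ends Rs e2]].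

Definition matching_number (k n : nat) (t : 'I_k -> nat)
  (Rs : forall i : 'I_k, 'I_(t i) -> {set 'I_n}) : nat :=
  \max_(M : {set edge_idx t} | is_matching Rs M) #|M|.

Definition is_vertex_cover (k n : nat) (t : 'I_k -> nat)
  (Rs : forall i : 'I_k, 'I_(t i) -> {set 'I_n}) (C : {set vertex Rs}) : bool :=
  [forall e : edge_idx t, ~~ [disjoint C & ends Rs e]].
Arguments is_vertex_cover {k n t} Rs C.

(* v(G): vertex cover number (minimum size; the full vertex set is a cover
   whenever every edge has an endpoint, so #|V| is a harmless initial value). *)
Definition vertex_cover_number (k n : nat) (t : 'I_k -> nat)
  (Rs : forall i : 'I_k, 'I_(t i) -> {set 'I_n}) : nat :=
  \big[minn/#|vertex Rs|]_(C : {set vertex Rs} | is_vertex_cover Rs C) #|C|.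

Definition is_max (R : realType) (S : R -> Prop) (x : R) : Prop :=
  S x /\ forall y, S y -> y <= x.

Definition frac_matching_values (R : realType) (k n : nat) (t : 'I_k -> nat)
  (Rs : forall i : 'I_k, 'I_(t i) -> {set 'I_n}) (s : R) : Prop :=
  exists x : edge_idx t -> R,
    (forall e, 0 <= x e <= 1) /\
    (forall v : vertex Rs, \sum_(e | v \in ends Rs e) x e <= 1) /\
    s = \sum_e x e.

Definition service_region (R : realType) (k n : nat) (t : 'I_k -> nat)
  (Rs : forall i : 'I_k, 'I_(t i) -> {set 'I_n}) (lam : 'I_k -> R) : Prop :=
  exists lamij : edge_idx t -> R,
    (forall e, 0 <= lamij e) /\
    (forall i : 'I_k, \sum_(j : 'I_(t i)) lamij (Tagged (fun i => 'I_(t i)) j) = lam i) /\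
    (forall l : 'I_n, \sum_(e | l \in RS Rs e) lamij e <= 1).

Definition service_sums (R : realType) (k n : nat) (t : 'I_k -> nat)
  (Rs : forall i : 'I_k, 'I_(t i) -> {set 'I_n}) (s : R) : Prop :=
  exists lam : 'I_k -> R, service_region Rs lam /\ s = \sum_i lam i.

(* Main.v *)
Require Import Defs.
From HB Require Import structures.
From mathcomp Require Import all_boot all_order all_algebra.
From mathcomp Require Import reals.
From mathcomp Require Import all_classical all_reals all_analysis.
Import Order.TTheory GRing.Theory Num.Theory.
Import numFieldNormedType.Exports.
Local Open Scope ring_scope.

Local Open Scope classical_set_scope.
Lemma sum_cont (R : realType) (E : finType) (r : seq E) (P : pred E) :
  continuous (fun x : {ptws E -> R} => \sum_(e <- r | P e) x e).
Proof.
elim: r => [|a r IH].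
  have -> : (fun x : {ptws E -> R} => \sum_(e <- [::] | P e) x e) = (fun=> 0).
    by apply: funext => x; rewrite big_nil.
  exact: cst_continuous.
have -> : (fun x : {ptws E -> R} => \sum_(e <- a :: r | P e) x e) =
   (if P a then (fun x : {ptws E -> R} => x a + \sum_(e <- r | P e) x e)
    else (fun x : {ptws E -> R} => \sum_(e <- r | P e) x e)).
  by apply: funext => x; rewrite big_cons; case: (P a).
case: (P a) => //.
move=> x; apply: (@continuousD _ _ _ (fun x : {ptws E -> R} => x a) (fun x => \sum_(e <- r | P e) x e)) => //.
exact: (@proj_continuous E (fun _ => R) a).
exact: IH.
Qed.

Lemma lp_max (R : realType) (E : finType) (V : finType) (Q : V -> pred E) :
  exists2 c : E -> R, ((forall e, 0 <= c e <= 1) /\ (forall v, \sum_(e | Q v e) c e <= 1)) &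
   forall x : E -> R, ((forall e, 0 <= x e <= 1) /\ (forall v, \sum_(e | Q v e) x e <= 1)) ->
     \sum_e x e <= \sum_e c e.
Proof.
pose A : set {ptws E -> R} := [set x | (forall e, 0 <= x e <= 1) /\ (forall v, \sum_(e | Q v e) x e <= 1)].
have A0 : A !=set0.
  exists (fun _ => 0); split => [e|v]; first by rewrite lexx ler01.
  by rewrite big1.
have cA : compact A.
  apply: (@subclosed_compact _ _ [set f : {ptws E -> R} | forall e, `[0, 1] (f e)]).
  - have -> : A = [set f : {ptws E -> R} | forall e, `[(0:R), 1] (f e)] `&`
        \bigcap_(v in setT) [set x : {ptws E -> R} | \sum_(e | Q v e) x e <= 1].
      apply/seteqP; split => x /=.
        by move=> [h1 h2]; split => [e|v _]; rewrite ?in_itv //=.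
      by move=> [h1 h2]; split => [e|v]; [move: (h1 e); rewrite in_itv|apply: h2].
    apply: closedI.
      have -> : [set f : {ptws E -> R} | forall e, `[(0:R), 1] (f e)] = \bigcap_(e in setT) ((fun f : {ptws E -> R} => f e) @^-1` `[0,1]).
        apply/seteqP; split => x /= h e; [move=> _; exact: (h e) | exact: (h e I)].
      apply: closed_bigI => e _; apply: preimage_closed.
        move=> ? _; exact: (@proj_continuous E (fun _ => R) e).
      exact: interval_closed.
    apply: closed_bigI => v _.
    apply: (@preimage_closed _ _ (fun x : {ptws E -> R} => \sum_(e | Q v e) x e) [set r | r <= 1]).
      by move=> ? _; apply: sum_cont.
    exact: closed_le.
  - have := (@tychonoff E (fun _ => R) (fun _ => `[0, 1]) (fun _ => @segment_compact R 0 1)).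
    move=> h. exact h.
  - by move=> x [h _] e; rewrite /= in_itv /=.
have cf : {within A, continuous (fun x : {ptws E -> R} => \sum_e x e)}.
  apply: continuous_subspaceT => x; exact: sum_cont.
have [c cA' cmax] := compact_EVT_max A0 cA cf.
exists c; first by rewrite inE in cA'.
by move=> x Ax; apply: cmax; rewrite inE.
Qed.

Local Close Scope classical_set_scope.
Lemma sum_sig (R : realType) k (t : 'I_k -> nat) (f : edge_idx t -> R) :
  \sum_i \sum_(j : 'I_(t i)) f (Tagged (fun i => 'I_(t i)) j) = \sum_e f e.
Proof.
rewrite (sig_big_dep xpredT (fun i _ => true) (fun i (j : 'I_(t i)) => f (Tagged (fun i => 'I_(t i)) j))) /=.
by apply: eq_big => // -[i j].
Qed.

Section S.
Variables (k n : nat) (t : 'I_k -> nat) (Rs : forall i : 'I_k, 'I_(t i) -> {set 'I_n}).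

Lemma in_ends_inl l e : (inl l \in ends Rs e) = (l \in RS Rs e).
Proof.
rewrite /ends inE mem_imset; last by move=> a b [].
case: insub => [d|]; last by rewrite inE orbF.
by rewrite inE orbF.
Qed.

Lemma in_ends_inr (d : dummy_idx Rs) e : (inr d \in ends Rs e) = (val d == e).
Proof.
rewrite /ends finset.in_setU.
have -> : (inr d \in (@inl 'I_n (dummy_idx Rs)) @: RS Rs e) = false.
  by apply/negbTE/imsetP => -[x _].
case: insubP => [u _ vu|nP] /=.
  by rewrite inE -vu; apply/eqP/eqP => [[->]|/val_inj ->].
rewrite inE; apply/esym/negbTE; apply: contra nP => /eqP <-.
exact: (valP d).
Qed.
End S.

Theorem theorem2 (R : realType) (F : finFieldType) (k n : nat)
  (G : 'M[F]_(k, n)) (t : 'I_k -> nat)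
  (Rs : forall i : 'I_k, 'I_(t i) -> {set 'I_n}) :
  \rank G = k ->
  (forall i, (1 <= t i)%N) ->
  (forall i (j : 'I_(t i)), #|Rs i j| = 1%N \/ #|Rs i j| = 2%N) ->
  (forall i (j : 'I_(t i)), recovery_set G i (Rs i j)) ->
  exists lam_star mf : R,
    is_max (service_sums Rs) lam_star /\
    is_max (frac_matching_values Rs) mf /\
    (matching_number Rs)%:R <= lam_star /\
    lam_star = mf /\
    mf <= (vertex_cover_number Rs)%:R.
Proof.
move=> _ _ hcard _.
have RSn : forall e : edge_idx t, exists l, l \in RS Rs e.
  move=> [i j]; apply/card_gt0P; rewrite /RS /=.
  by case: (hcard i j) => ->.
have [c [c01 cv] cmax] := @lp_max R (edge_idx t) (vertex Rs) (fun v e => v \in ends Rs e).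
pose mf := \sum_e c e.
have fracmax : is_max (frac_matching_values Rs) mf.
  split; first by exists c.
  by move=> y [x [h01 [hv ->]]]; apply: cmax.
have eqv : forall s, service_sums Rs s <-> frac_matching_values Rs s.
  move=> s; split.
    move=> [lam [[x [x0 [hlam hserv]]] ->]].
    have x1 : forall e, x e <= 1.
      move=> e; have [l hl] := RSn e.
      apply: le_trans (hserv l); rewrite (bigD1 e) //= lerDl.
      by apply: sumr_ge0 => ? _.
    exists x; split; first by move=> e; rewrite x0 x1.
    split.
      move=> [l|d].
        rewrite (eq_bigl (fun e => l \in RS Rs e)); first exact: hserv.
        by move=> e; rewrite in_ends_inl.
      rewrite (big_pred1 (val d)); first exact: x1.
      by move=> e; rewrite in_ends_inr eq_sym.
    rewrite -sum_sig; apply: eq_bigr => i _; exact/esym/hlam.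
  move=> [x [h01 [hv ->]]].
  exists (fun i => \sum_(j : 'I_(t i)) x (Tagged (fun i => 'I_(t i)) j)).
  split; last by rewrite sum_sig.
  exists x; split; first by move=> e; case/andP: (h01 e).
  split; first by [].
  move=> l; rewrite (eq_bigl (fun e => inl l \in ends Rs e)); first exact: hv.
  by move=> e; rewrite in_ends_inl.
have mf0 : 0 <= mf.
  apply: fracmax.2; exists (fun _ => 0); split; first by move=> e; rewrite lexx ler01.
  by split; [move=> v; rewrite big1|rewrite big1].
have hC : forall C, is_vertex_cover Rs C -> mf <= #|C|%:R.
  move=> C /forallP hcov.
  apply: (@le_trans _ _ (\sum_e \sum_(v in C) (if v \in ends Rs e then c e else 0))).
    apply: ler_sum => e _.
    have := hcov e; rewrite -finset.setI_eq0 => /finset.set0Pn [v0 /finset.setIP [v0C v0e]].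
    rewrite (bigD1 v0) //= v0e lerDl; apply: sumr_ge0 => v _.
    by case: ifP => // _; case/andP: (c01 e).
  rewrite exchange_big /=.
  apply: (@le_trans _ _ (\sum_(v in C) (1 : R))); last by rewrite sumr_const.
  by apply: ler_sum => v _; rewrite -big_mkcond; exact: cv.
exists mf, mf; split.
  split; first by apply/eqv; exact: fracmax.1.
  by move=> y /eqv; apply: fracmax.2.
split; first exact: fracmax.
split.
  rewrite /matching_number.
  apply: (big_ind (fun m : nat => (m%:R : R) <= mf)) => //.
    by move=> a b ha hb; rewrite /maxn; case: ifP.
  move=> M hM; apply: fracmax.2.
  exists (fun e => if e \in M then 1 else 0); split.
    by move=> e; case: ifP; rewrite ?lexx ?ler01.
  split; last by rewrite -big_mkcond /= sumr_const.
  move=> v.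
  case: (pickP (fun e => (v \in ends Rs e) && (e \in M))) => [e0 /andP[ve0 e0M] | none].
    rewrite (bigD1 e0) //= e0M big1 ?addr0 // => e /andP[ve ne].
    case eM: (e \in M) => //.
    move/forall_inP: hM => /(_ e0 e0M) /forall_inP /(_ e eM) /implyP.
    rewrite eq_sym ne => /(_ isT) dis.
    by move: ve; rewrite (disjointFr dis ve0).
  rewrite big1 ?ler01 // => e ve.
  by have := none e; rewrite ve /= => ->.
split; first by [].
rewrite /vertex_cover_number.
apply: (big_ind (fun m : nat => mf <= (m%:R : R))).
- rewrite -finset.cardsT; apply: hC; apply/forallP => e.
  have [l hl] := RSn e.
  apply/negP => /disjointFr /(_ (finset.in_setT (inl l))).
  by rewrite in_ends_inl hl.
- by move=> a b ha hb; rewrite /minn; case: ifP.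
- by move=> C hcov; apply: hC.
Qed.
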